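(* Let $A_1,\dots,A_m\in\mathbb{S}^n$ and $b\in\mathbb{R}^m$. If Assumption 1 holds for some $p$, then it holds for every $p'\le p$ such that $\mathcal{M}_{p'}$ is non-empty. Furthermore, if Assumption 1(a) holds for $p=n$, then it holds for every $p'$ such that $\mathcal{M}_{p'}$ is non-empty. In both cases, the associated dimension $m'$ is independent of $p$.
   Context: $\mathbb{S}^n$: real symmetric $n\times n$ matrices; $\langle U,V\rangle=\operatorname{tr}(U^\top V)$. For $p\ge1$, $\mathcal{M}_p=\{Y\in\mathbb{R}^{n\times p}:\langle A_i,YY^\top\rangle=b_i,\ i=1,\dots,m\}$. Assumption 1 (for a given $p$ with $\mathcal{M}_p\ne\emptyset$): either (a) $A_1Y,\dots,A_mY$ are linearly independent in $\mathbb{R}^{n\times p}$ for all $Y\in\mathcal{M}_p$, or (b) $\operatorname{span}\{A_1Y,\dots,A_mY\}$ has the same dimension for all $Y$ in an open neighborhood of $\mathcal{M}_p$ in $\mathbb{R}^{n\times p}$. In either case $m'$ denotes the dimension of $\operatorname{span}\{A_1Y,\dots,A_mY\}$ for $Y\in\mathcal{M}_p$. *)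

(* Defs.v *)
From HB Require Import structures.
From mathcomp Require Import all_boot all_order all_algebra.
From mathcomp Require Import all_classical all_reals all_analysis.
Import numFieldTopology.Exports numFieldNormedType.Exports.
Set Implicit Arguments. Unset Strict Implicit. Unset Printing Implicit Defensive.
Import Order.TTheory GRing.Theory Num.Theory.
Local Open Scope ring_scope.
Local Open Scope classical_set_scope.

Definition frob (R : realType) (n p : nat) (U V : 'M[R]_(n, p)) : R :=
  \tr (U^T *m V).

Definition Mset (R : realType) (n m p : nat)
  (A : 'I_m -> 'M[R]_n) (b : 'I_m -> R) : set 'M[R]_(n, p) :=
  [set Y | forall i, frob (A i) (Y *m Y^T) = b i].
Arguments Mset {R n m} p A b _.

(* The m x (n*p) matrix whose rows are vec(A_i Y); its row space is
   span{A_1 Y, ..., A_m Y} (up to the linear isomorphism mxvec). *)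
Definition AYmx (R : realType) (n m p : nat)
  (A : 'I_m -> 'M[R]_n) (Y : 'M[R]_(n, p)) : 'M[R]_(m, n * p) :=
  \matrix_(i < m) mxvec (A i *m Y).

Definition spandim (R : realType) (n m p : nat)
  (A : 'I_m -> 'M[R]_n) (Y : 'M[R]_(n, p)) : nat :=
  \rank (AYmx A Y).
Arguments AYmx {R n m p} A Y.
Arguments spandim {R n m p} A Y.

Definition assum1a (R : realType) (n m p : nat)
  (A : 'I_m -> 'M[R]_n) (b : 'I_m -> R) : Prop :=
  forall Y : 'M[R]_(n, p), Mset p A b Y -> row_free (AYmx A Y).

Definition assum1b (R : realType) (n m p : nat)
  (A : 'I_m -> 'M[R]_n) (b : 'I_m -> R) : Prop :=
  exists U : set 'M[R]_(n, p), [/\ open U, Mset p A b `<=` U &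
    forall Y Z, U Y -> U Z -> spandim A Y = spandim A Z].
Arguments assum1a {R n m} p A b.
Arguments assum1b {R n m} p A b.

(* Assumption 1 for p (including the standing requirement M_p <> empty). *)
Definition assum1 (R : realType) (n m p : nat)
  (A : 'I_m -> 'M[R]_n) (b : 'I_m -> R) : Prop :=
  (exists Y : 'M[R]_(n, p), Mset p A b Y) /\
  (assum1a p A b \/ assum1b p A b).
Arguments assum1 {R n m} p A b.

(* Main.v *)
Require Import Defs.
From HB Require Import structures.
From mathcomp Require Import all_boot all_order all_algebra.
From mathcomp Require Import all_classical all_reals all_analysis.
From mathcomp Require Import zify ring lra.
Import numFieldTopology.Exports numFieldNormedType.Exports.
Import Order.TTheory GRing.Theory Num.Theory.
Local Open Scope ring_scope.
Local Open Scope classical_set_scope.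

Section Alg.
Variable R : realType.



Lemma mmt_eq0 k l (M : 'M[R]_(k, l)) : M *m M^T = 0 -> M = 0.
Proof.
move=> H; apply/matrixP => i j; rewrite mxE.
have /matrixP/(_ i i) := H; rewrite !mxE.
under eq_bigr do rewrite mxE.
move=> /psumr_eq0P h.
have : M i j * M i j = 0 by apply: h => // x _; rewrite -expr2 sqr_ge0.
by move/eqP; rewrite mulf_eq0 orbb => /eqP.
Qed.

Lemma mulY_eq0 k l q (B : 'M[R]_(k, l)) (Y : 'M[R]_(l, q)) :
  (B *m Y == 0) = (B *m (Y *m Y^T) == 0).
Proof.
apply/idP/idP => [/eqP H|/eqP H]; first by rewrite mulmxA H mul0mx.
apply/eqP/mmt_eq0; rewrite trmx_mul mulmxA -(mulmxA B) H mul0mx //.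
Qed.

Lemma AY_eq0 n m p (A : 'I_m -> 'M[R]_n) (Y : 'M[R]_(n, p)) (c : 'rV[R]_m) :
  (c *m AYmx A Y == 0) = ((\sum_i c 0 i *: A i) *m (Y *m Y^T) == 0).
Proof.
rewrite -mulY_eq0 mulmx_sum_row -[X in _ = X]mxvec_eq0 mulmx_suml linear_sum /=.
congr (_ == 0); apply: eq_bigr => i _; rewrite rowK -scalemxAl linearZ //.
Qed.

Lemma spandim_gram n m p q (A : 'I_m -> 'M[R]_n) (Y : 'M[R]_(n, p))
  (Z : 'M[R]_(n, q)) : Y *m Y^T = Z *m Z^T -> spandim A Y = spandim A Z.
Proof.
move=> E.
have sub : forall p1 p2 (Y1 : 'M[R]_(n, p1)) (Y2 : 'M[R]_(n, p2)),
  Y1 *m Y1^T = Y2 *m Y2^T -> (kermx (AYmx A Y1) <= kermx (AYmx A Y2))%MS.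
  move=> p1 p2 Y1 Y2 E12; rewrite sub_kermx; apply/eqP/row_matrixP => i.
  rewrite row_mul row0; apply/eqP; rewrite AY_eq0 -E12 -AY_eq0.
  by rewrite -row_mul mulmx_ker row0.
have e : (kermx (AYmx A Y) == kermx (AYmx A Z))%MS.
  by apply/andP; split; apply: sub.
have := eqmx_rank e; rewrite !mxrank_ker /spandim.
have := rank_leq_row (AYmx A Y); have := rank_leq_row (AYmx A Z).
lia.
Qed.

Definition padmx p' p : 'M[R]_(p', p) := \matrix_(i, j) ((i : nat) == j)%:R.

Lemma padmx_tr p' p : (p' <= p)%N -> padmx p' p *m (padmx p' p)^T = 1%:M.
Proof.
move=> h; apply/matrixP => i k; rewrite !mxE (bigD1 (widen_ord h i)) //=.
rewrite big1 ?addr0; last first.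
  move=> j hj; rewrite !mxE.
  have -> : ((i : nat) == j) = false.
    by apply/negbTE; apply: contra hj => /eqP hij; apply/eqP/val_inj.
  by rewrite mul0r.
rewrite !mxE /= eqxx mul1r.
by case: (eqVneq i k) => [->|ne]; rewrite ?eqxx // eq_sym; have -> : ((i:nat) == k) = false by apply/negbTE.
Qed.

Lemma pad_gram n p' p (h : (p' <= p)%N) (Y : 'M[R]_(n, p')) :
  (Y *m padmx p' p) *m (Y *m padmx p' p)^T = Y *m Y^T.
Proof. by rewrite trmx_mul mulmxA -(mulmxA Y) padmx_tr // mulmx1. Qed.

Lemma pad_entry n p' p (Y : 'M[R]_(n, p')) i j :
  (Y *m padmx p' p) i j = if (j < p')%N =P true is ReflectT hj then Y i (Ordinal hj) else 0.
Proof.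
rewrite mxE; case: eqP => [hj|hj].
  rewrite (bigD1 (Ordinal hj)) //= big1 ?addr0; last first.
    move=> k hk; rewrite mxE.
    have -> : ((k : nat) == j) = false.
      by apply/negbTE; apply: contra hk => /eqP hkj; apply/eqP/val_inj.
    by rewrite mulr0.
  by rewrite mxE eqxx mulr1.
rewrite big1 // => k _; rewrite mxE.
have -> : ((k : nat) == j) = false.
  apply/negbTE; apply/negP => /eqP hkj; apply: hj; rewrite -hkj; exact: ltn_ord.
by rewrite mulr0.
Qed.

Lemma pad_continuous n p' p : continuous (fun Y : 'M[R]_(n, p') => Y *m padmx p' p).
Proof.
move=> u A /nbhs_ballP[e /= e0 eA].
apply/nbhs_ballP; exists e => //= v [_ uv]; apply: eA; split => // i j.
rewrite !pad_entry; case: eqP => hj; first exact: uv.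
exact: ballxx.
Qed.


Lemma tr11 (M : 'M[R]_1) : M^T = M.
Proof. by rewrite [M]mx11_scalar tr_scalar_mx. Qed.

Lemma householder N (u : 'cV[R]_N.+1) : u^T *m u = 1%:M ->
  exists Q : 'M[R]_N.+1, Q *m Q^T = 1%:M /\ Q *m delta_mx ord0 ord0 = u.
Proof.
move=> uu.
set e : 'cV[R]_N.+1 := delta_mx ord0 ord0.
have ee : e^T *m e = 1%:M.
  by rewrite /e trmx_delta mul_delta_mx; apply/matrixP => i j; rewrite !ord1 !mxE.
set v := e - u.
have [v0|vn0] := eqVneq v 0.
  exists 1%:M; rewrite trmx1 mulmx1 mul1mx; split => //.
  by apply/eqP; rewrite -subr_eq0 -/v v0.
set t := (v^T *m v) 0 0.
have tn0 : t != 0.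
  apply: contra vn0 => /eqP t0; apply/eqP.
  have : v^T *m v^T^T = 0 by rewrite trmxK [_ *m _]mx11_scalar -/t t0 raddf0.
  by move/mmt_eq0 => /(congr1 trmx); rewrite trmxK trmx0.
set h := (v^T *m e) 0 0.
have eu : (e^T *m u) 0 0 = (u^T *m e) 0 0.
  by rewrite -[u^T *m e]tr11 trmx_mul trmxK.
have th : t = h *+ 2.
  move: ee => /matrixP/(_ 0 0); rewrite !mxE eqxx => ee'.
  move: uu => /matrixP/(_ 0 0); rewrite !mxE eqxx => uu'.
  move: eu; rewrite !mxE => eu'.
  rewrite /t /h /v !raddfB /= !mulmxBl ?mulmxBr !mxE ee' uu' eu'.
  by rewrite mulr2n; lra.
set c := 2 / t.
have hn0 : h != 0 by apply: contra tn0; rewrite th => /eqP ->; rewrite mul0rn.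
have ch : c * h = 1 by rewrite /c th -mulr_natr; field; rewrite hn0.
set X := v *m v^T.
have XX : X *m X = t *: X.
  by rewrite /X mulmxA -(mulmxA v) [v^T *m v]mx11_scalar -/t mul_mx_scalar scalemxAl.
have XT : X^T = X by rewrite /X trmx_mul trmxK.
exists (1%:M - c *: X); split.
  have QT : (1%:M - c *: X)^T = 1%:M - c *: X.
    by rewrite linearB /= linearZ /= tr_scalar_mx XT.
  rewrite QT mulmxBl !mulmxBr mul1mx mulmx1.
  rewrite -!scalemxAl -!scalemxAr XX !scalerA mul1mx.
  have -> : (c * c * t) *: X = c *: X + c *: X.
    by rewrite -scalerDl; congr (_ *: _); rewrite /c; field.
  by rewrite opprB addrK subrK.
rewrite mulmxBl mul1mx -scalemxAl /X -mulmxA [v^T *m e]mx11_scalar -/h mul_mx_scalar.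
by rewrite scalerA ch scale1r /v opprB addrC subrK.
Qed.

Lemma gram_reduce n k (Y : 'M[R]_(n, k)) :
  exists Z : 'M[R]_(n, n), Z *m Z^T = Y *m Y^T.
Proof.
elim: k Y => [|k IH] Y.
  by exists (Y *m padmx 0 n); rewrite pad_gram.
case: (leqP k.+1 n) => hk.
  by exists (Y *m padmx k.+1 n); rewrite pad_gram.
set K := kermx Y^T.
have Kn0 : K != 0.
  rewrite -mxrank_eq0 /K mxrank_ker mxrank_tr.
  have := rank_leq_row Y; lia.
have [i hi] : exists i, row i K != 0.
  case: (boolP [exists i, row i K != 0]) => [/existsP[i hi]|/existsPn hall].
    by exists i.
  exfalso; move/eqP: Kn0; apply; apply/row_matrixP => i.
  by move: (hall i); rewrite negbK row0 => /eqP.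
set r := row i K.
have rY : r *m Y^T = 0 by rewrite /r -row_mul mulmx_ker row0.
set a := r^T.
have Ya : Y *m a = 0 by rewrite /a -[Y]trmxK -trmx_mul rY trmx0.
set x := (a^T *m a) 0 0.
have xge0 : 0 <= x.
  rewrite /x mxE; apply: sumr_ge0 => j _; rewrite mxE -expr2; exact: sqr_ge0.
have xn0 : x != 0.
  apply: contra hi => /eqP x0; apply/eqP; apply: mmt_eq0.
  have xr : x = (r *m r^T) 0 0 by rewrite /x /a trmxK.
  by rewrite [_ *m _]mx11_scalar -xr x0 raddf0.
set s := Num.sqrt x.
have s2 : s ^+ 2 = x by rewrite sqr_sqrtr.
have sn0 : s != 0 by apply: contra xn0 => /eqP s0; rewrite -s2 s0 expr0n.
set u := s^-1 *: a.
have uu : u^T *m u = 1%:M.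
  have -> : u^T = s^-1 *: a^T by apply/matrixP => ? ?; rewrite !mxE.
  rewrite /u -scalemxAl -scalemxAr scalerA [_ *m a]mx11_scalar -/x.
  rewrite -s2 !scale_scalar_mx.
  by have -> : s^-1 / s * (s ^+ 2) = 1 by field.
have [Q [QQ Qe]] := @householder k u uu.
set W : 'M[R]_(n, 1 + k) := Y *m Q.
have We : W *m (delta_mx ord0 ord0 : 'cV_(k.+1)) = 0.
  by rewrite /W -mulmxA Qe /u -scalemxAr Ya scaler0.
have Wl : lsubmx W = 0.
  apply/matrixP => j l; rewrite ord1 !mxE.
  have /matrixP/(_ j ord0) := We; rewrite -colE !mxE.
  by have -> : lshift k (ord0 : 'I_1) = ord0 by apply/val_inj.
have [Z hZ] := IH (rsubmx W).
exists Z; rewrite hZ.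
have -> : Y *m Y^T = W *m W^T.
  by rewrite /W trmx_mul mulmxA -(mulmxA Y) QQ mulmx1.
by rewrite -[W in RHS]hsubmxK tr_row_mx mul_row_col Wl mul0mx add0r.
Qed.

Lemma Mset_gram n m p q (A : 'I_m -> 'M[R]_n) (b : 'I_m -> R)
  (Y : 'M[R]_(n, p)) (Z : 'M[R]_(n, q)) :
  Y *m Y^T = Z *m Z^T -> Mset p A b Y -> Mset q A b Z.
Proof. by move=> E hY i; rewrite -E; exact: hY. Qed.

Lemma rowfree_gram n m p q (A : 'I_m -> 'M[R]_n)
  (Y : 'M[R]_(n, p)) (Z : 'M[R]_(n, q)) :
  Y *m Y^T = Z *m Z^T -> row_free (AYmx A Y) = row_free (AYmx A Z).
Proof.
by move=> E; rewrite /row_free; have := spandim_gram _ _ _ _ A _ _ E; rewrite /spandim => ->.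
Qed.

End Alg.

Theorem proposition2 (R : realType) (n m : nat)
  (A : 'I_m -> 'M[R]_n) (b : 'I_m -> R)
  (hsym : forall i, (A i)^T = A i) :
  (* Part 1: Assumption 1 for p is inherited by every 1 <= p' <= p with
     M_p' nonempty, with the same m'. *)
  (forall p p' : nat, (1 <= p')%N -> (p' <= p)%N ->
     assum1 p A b ->
     (exists Y' : 'M[R]_(n, p'), Mset p' A b Y') ->
     assum1 p' A b /\
     (forall (Y : 'M[R]_(n, p)) (Y' : 'M[R]_(n, p')),
        Mset p A b Y -> Mset p' A b Y' -> spandim A Y = spandim A Y'))
  /\
  (* Part 2: Assumption 1(a) for p = n gives Assumption 1 for every p' >= 1
     with M_p' nonempty, with the same m'. *)
  ((exists Y : 'M[R]_(n, n), Mset n A b Y) -> assum1a n A b ->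
   forall p' : nat, (1 <= p')%N ->
     (exists Y' : 'M[R]_(n, p'), Mset p' A b Y') ->
     assum1 p' A b /\
     (forall (Y : 'M[R]_(n, n)) (Y' : 'M[R]_(n, p')),
        Mset n A b Y -> Mset p' A b Y' -> spandim A Y = spandim A Y')).
Proof.
split.
- move=> p p' h1 hp [[Y0 hY0] Hab] [Y' hY'].
  pose pad := fun Z : 'M[R]_(n, p') => Z *m padmx R p' p.
  have padM : forall Z, Mset p' A b Z -> Mset p A b (pad Z).
    by move=> Z; apply: Mset_gram; rewrite /pad pad_gram.
  have padS : forall Z, spandim A (pad Z) = spandim A Z.
    by move=> Z; apply: spandim_gram; rewrite /pad pad_gram.
  have eqdim : forall Y Z, Mset p A b Y -> Mset p' A b Z -> spandim A Y = spandim A Z.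
    move=> Y Z hY hZ; rewrite -padS; case: Hab => [Ha|[U [oU sU cU]]].
      by have := Ha _ hY; have := Ha _ (padM _ hZ); rewrite /row_free /spandim => /eqP -> /eqP ->.
    by apply: cU; apply: sU => //; apply: padM.
  split => //; split; first by exists Y'.
  case: Hab => [Ha|[U [oU sU cU]]].
    left => Z hZ; rewrite -(@rowfree_gram R n m p p' A (pad Z) Z); last by rewrite /pad pad_gram.
    by apply: Ha; apply: padM.
  right; exists (pad @^-1` U); split.
  + by apply: open_comp => // Z _; exact: pad_continuous.
  + by move=> Z hZ; apply: sU; apply: padM.
  + by move=> Y Z hY hZ; rewrite -(padS Y) -(padS Z); exact: cU.
- move=> [Y0 hY0] Ha p' h1 [Y' hY'].
  have Hall : forall Z : 'M[R]_(n, p'), Mset p' A b Z -> row_free (AYmx A Z).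
    move=> Z hZ; have [W hW] := @gram_reduce R _ _ Z.
    rewrite -(@rowfree_gram R _ _ _ _ A _ _ hW); apply: Ha; exact: (@Mset_gram R _ _ _ _ A b _ _ (esym hW) hZ).
  split; first by split; [exists Y' | left].
  move=> Y Z hY hZ; have := Ha _ hY; have := Hall _ hZ.
  by rewrite /row_free /spandim => /eqP -> /eqP ->.
Qed.
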